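(* Let $G$ be a group with neutral element $e$ and let $S=\bigoplus_{g\in G}S_g$ be an epsilon-strongly $G$-graded ring. (a) If $S_e$ is block decomposable, then $S$ is epsilon-finitely $G$-graded. (b) If $S_e$ is left or right noetherian, then $S$ is epsilon-finitely $G$-graded. In particular, if $S_e$ is left or right noetherian and $N$ is any normal subgroup of $G$, then the induced $G/N$-grading of $S$ is epsilon-strong.
   Context: Rings are associative, not necessarily unital; $AB$ denotes finite sums of products. A $G$-grading ($S=\bigoplus_gS_g$, $S_gS_h\subseteq S_{gh}$) is epsilon-strong if $S_gS_{g^{-1}}S_g=S_g$ for all $g$ and each ring $S_gS_{g^{-1}}$ has a multiplicative identity element $\epsilon_g$ (then $S$ and $S_e$ are unital and the $\epsilon_g$ are central idempotents of $S_e$). It is epsilon-finite if it is epsilon-strong and $\bigvee\{\epsilon_g\mid g\in G\}$ (the set of finite joins, $a\vee b=a+b-ab$) is finite. A unital ring $R$ is block decomposable if $1=c_1+\cdots+c_r$ with each $c_i$ a central primitive idempotent. Induced grading: $S_C=\bigoplus_{g\in C}S_g$ for $C\in G/N$. *)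

(* Defs.v *)
From HB Require Import structures.
From mathcomp Require Import all_boot all_order all_algebra.
Set Implicit Arguments. Unset Strict Implicit. Unset Printing Implicit Defensive.
Import GRing.Theory.
Local Open Scope ring_scope.


Section Defs.
Variable S : pzRingType.

Definition seteq (A B : S -> Prop) : Prop := forall x, A x <-> B x.

Definition addsubgroup (A : S -> Prop) : Prop :=
  A 0 /\ (forall x y, A x -> A y -> A (x - y)).

Definition prodset (A B : S -> Prop) : S -> Prop :=
  fun x => exists l : seq (S * S),
    (forall p, p \in l -> A p.1 /\ B p.2) /\ x = \sum_(p <- l) (p.1 * p.2).

Definition is_identity_of (A : S -> Prop) (u : S) : Prop :=
  A u /\ (forall x, A x -> u * x = x /\ x * u = x).

Variable G : groupType.

Definition is_grading (Sg : G -> S -> Prop) : Prop :=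
  (forall g, addsubgroup (Sg g)) /\
  (forall g h x y, Sg g x -> Sg h y -> Sg (g * h)%g (x * y)) /\
  (forall s, exists l : seq (G * S),
      uniq (map fst l) /\ (forall p, p \in l -> Sg p.1 p.2) /\
      s = \sum_(p <- l) p.2) /\
  (forall l : seq (G * S),
      uniq (map fst l) -> (forall p, p \in l -> Sg p.1 p.2) ->
      \sum_(p <- l) p.2 = 0 -> forall p, p \in l -> p.2 = 0).

Definition eps_strong_family (I : Type) (inv : I -> I) (F : I -> S -> Prop)
  : Prop :=
  forall i, seteq (prodset (prodset (F i) (F (inv i))) (F i)) (F i) /\
            exists u, is_identity_of (prodset (F i) (F (inv i))) u.

Definition epsilon_strong (Sg : G -> S -> Prop) : Prop :=
  is_grading Sg /\ eps_strong_family (fun g => (g^-1)%g) Sg.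

Definition is_eps (Sg : G -> S -> Prop) (g : G) (u : S) : Prop :=
  is_identity_of (prodset (Sg g) (Sg (g^-1)%g)) u.

Definition join (a b : S) : S := a + b - a * b.

Definition finite_join_of_eps (Sg : G -> S -> Prop) (x : S) : Prop :=
  exists l : seq S, l != [::] /\
    (forall u, u \in l -> exists g, is_eps Sg g u) /\ x = foldr join 0 l.

Definition epsilon_finite (Sg : G -> S -> Prop) : Prop :=
  epsilon_strong Sg /\
  exists fin : seq S, forall x, finite_join_of_eps Sg x -> x \in fin.

Definition central_in (R : S -> Prop) (c : S) : Prop :=
  forall x, R x -> c * x = x * c.

Definition central_idempotent_of (R : S -> Prop) (c : S) : Prop :=
  R c /\ central_in R c /\ c * c = c.

Definition central_primitive_idempotent (R : S -> Prop) (c : S) : Prop :=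
  central_idempotent_of R c /\ c != 0 /\
  (forall c1 c2, central_idempotent_of R c1 -> central_idempotent_of R c2 ->
     c1 * c2 = 0 -> c = c1 + c2 -> c1 = 0 \/ c2 = 0).

Definition block_decomposable (R : S -> Prop) : Prop :=
  exists u, is_identity_of R u /\
  exists cs : seq S, (forall c, c \in cs -> central_primitive_idempotent R c) /\
    u = \sum_(c <- cs) c.

Definition left_ideal_of (R I : S -> Prop) : Prop :=
  (forall x, I x -> R x) /\ addsubgroup I /\
  (forall r x, R r -> I x -> I (r * x)).

Definition right_ideal_of (R I : S -> Prop) : Prop :=
  (forall x, I x -> R x) /\ addsubgroup I /\
  (forall r x, R r -> I x -> I (x * r)).

Definition left_noetherian (R : S -> Prop) : Prop :=
  forall I : nat -> S -> Prop, (forall n, left_ideal_of R (I n)) ->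
    (forall n x, I n x -> I n.+1 x) ->
    exists N, forall n, (N <= n)%N -> seteq (I n) (I N).

Definition right_noetherian (R : S -> Prop) : Prop :=
  forall I : nat -> S -> Prop, (forall n, right_ideal_of R (I n)) ->
    (forall n x, I n x -> I n.+1 x) ->
    exists N, forall n, (N <= n)%N -> seteq (I n) (I N).

(* Normal subgroups and the induced G/N-grading, where the coset gN is
   represented by g:  S_{gN} = (+)_{h in gN} S_h  (h in gN iff g^-1 h in N),
   and (gN)^-1 = g^-1 N. *)
Definition normal_subgroup (N : G -> Prop) : Prop :=
  N 1%g /\ (forall x y, N x -> N y -> N (x * y^-1)%g) /\
  (forall g n, N n -> N (g^-1 * n * g)%g).

Definition induced_component (Sg : G -> S -> Prop) (N : G -> Prop) (g : G)
  : S -> Prop :=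
  fun x => exists l : seq (G * S),
    (forall p, p \in l -> N (g^-1 * p.1)%g /\ Sg p.1 p.2) /\
    x = \sum_(p <- l) p.2.

End Defs.

(* Main.v *)
Require Import Defs.
From mathcomp Require Import all_boot all_order all_algebra.
From Stdlib Require Import ClassicalEpsilon Classical.
Set Implicit Arguments. Unset Strict Implicit. Unset Printing Implicit Defensive.
Import GRing.Theory.
Local Open Scope ring_scope.

Section Gen.
Variable S : pzRingType.

Lemma sumP (P : S -> Prop) (I : eqType) (l : seq I) (F : I -> S) :
  P 0 -> (forall x y, P x -> P y -> P (x + y)) ->
  (forall i, i \in l -> P (F i)) -> P (\sum_(i <- l) F i).
Proof.
move=> H0 HD; elim: l => [|a l IH] HF; first by rewrite big_nil.
rewrite big_cons; apply: HD; first by apply: HF; rewrite mem_head.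
by apply: IH => i Hi; apply: HF; rewrite in_cons Hi orbT.
Qed.

Lemma prodset_ind (A B Q : S -> Prop) x :
  Q 0 -> (forall x y, Q x -> Q y -> Q (x + y)) ->
  (forall a b, A a -> B b -> Q (a * b)) -> prodset A B x -> Q x.
Proof.
move=> H0 HD HAB [l [Hl ->]]; apply: sumP => // p /Hl [Ha Hb]; exact: HAB.
Qed.

Lemma prodset_indF (A B Q : S -> Prop) :
  Q 0 -> (forall x y, Q x -> Q y -> Q (x + y)) ->
  (forall a b, A a -> B b -> Q (a * b)) -> forall x, prodset A B x -> Q x.
Proof. by move=> H0 HD HAB x; apply: prodset_ind. Qed.

Lemma prodset_single (A B : S -> Prop) a b : A a -> B b -> prodset A B (a * b).
Proof.
move=> Ha Hb; exists [:: (a, b)]; split; last by rewrite big_seq1.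
by move=> p; rewrite mem_seq1 => /eqP ->.
Qed.

Lemma prodset0 (A B : S -> Prop) : prodset A B 0.
Proof. by exists [::]; split => //; rewrite big_nil. Qed.

Lemma prodsetD (A B : S -> Prop) x y :
  prodset A B x -> prodset A B y -> prodset A B (x + y).
Proof.
move=> [l1 [H1 ->]] [l2 [H2 ->]]; exists (l1 ++ l2); split; last by rewrite big_cat.
by move=> p; rewrite mem_cat => /orP [] ?; [apply: H1 | apply: H2].
Qed.

Lemma prodset_mono (A B A' B' : S -> Prop) x :
  (forall a, A a -> A' a) -> (forall b, B b -> B' b) ->
  prodset A B x -> prodset A' B' x.
Proof.
move=> HA HB; move: x; apply: prodset_indF.
- exact: prodset0.
- by move=> ? ? ? ?; apply: prodsetD.
- by move=> a b Ha Hb; apply: prodset_single; [apply: HA | apply: HB].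
Qed.

Lemma zmod_id1 (u a b c : S) : a + b - c = u - ((u - b) - (a - c)).
Proof.
rewrite opprB opprB.
by rewrite addrCA [u + _]addrC subrK addrAC.
Qed.

End Gen.
Section Grad.
Variables (G : groupType) (S : pzRingType) (Sg : G -> S -> Prop).
Hypothesis Hes : epsilon_strong Sg.

Lemma Sg0 g : Sg g 0.
Proof. by case: Hes => [[Ha _] _]; case: (Ha g). Qed.
Lemma SgB g x y : Sg g x -> Sg g y -> Sg g (x - y).
Proof. by case: Hes => [[Ha _] _]; case: (Ha g) => _; apply. Qed.
Lemma SgN g x : Sg g x -> Sg g (- x).
Proof. by move=> Hx; rewrite -sub0r; apply: SgB => //; apply: Sg0. Qed.
Lemma SgD g x y : Sg g x -> Sg g y -> Sg g (x + y).
Proof. by move=> Hx Hy; rewrite -[y]opprK; apply: SgB => //; apply: SgN. Qed.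
Lemma SgM g h x y : Sg g x -> Sg h y -> Sg (g * h)%g (x * y).
Proof. by case: Hes => [[_ [Hm _]] _]; apply: Hm. Qed.
Lemma SgM1l g x y : Sg 1%g x -> Sg g y -> Sg g (x * y).
Proof. by move=> Hx Hy; rewrite -[g]mul1g; apply: SgM. Qed.
Lemma SgM1r g x y : Sg g x -> Sg 1%g y -> Sg g (x * y).
Proof. by move=> Hx Hy; rewrite -[g]mulg1; apply: SgM. Qed.
Lemma R1M x y : Sg 1%g x -> Sg 1%g y -> Sg 1%g (x * y).
Proof. exact: SgM1l. Qed.

Lemma Hfam g : seteq (prodset (prodset (Sg g) (Sg g^-1)) (Sg g)) (Sg g) /\
   exists u, is_eps Sg g u.
Proof. move: Hes => [_ H]. exact: (H g). Qed.

Lemma prod_sub g h x : prodset (Sg g) (Sg h) x -> Sg (g * h)%g x.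
Proof.
move: x; apply: prodset_indF; [exact: Sg0 | exact: SgD | exact: SgM].
Qed.

Lemma Pg_lmul g r x : Sg 1%g r -> prodset (Sg g) (Sg g^-1) x ->
   prodset (Sg g) (Sg g^-1) (r * x).
Proof.
move=> Hr; move: x; apply: prodset_indF.
- by rewrite mulr0; apply: prodset0.
- by move=> y z Hy Hz; rewrite mulrDr; apply: prodsetD.
- by move=> a b Ha Hb; rewrite mulrA; apply: prodset_single => //; apply: SgM1l.
Qed.

Lemma Pg_rmul g r x : Sg 1%g r -> prodset (Sg g) (Sg g^-1) x ->
   prodset (Sg g) (Sg g^-1) (x * r).
Proof.
move=> Hr; move: x; apply: prodset_indF.
- by rewrite mul0r; apply: prodset0.
- by move=> y z Hy Hz; rewrite mulrDl; apply: prodsetD.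
- by move=> a b Ha Hb; rewrite -mulrA; apply: prodset_single => //; apply: SgM1r.
Qed.

Section Eps.
Variables (g : G) (u : S).
Hypothesis Hu : is_eps Sg g u.

Lemma eps_R : Sg 1%g u.
Proof. by case: Hu => /prod_sub; rewrite mulgV. Qed.

Lemma eps_l x : Sg g x -> u * x = x.
Proof.
move=> /(proj2 ((proj1 (Hfam g)) x)); move: x; apply: prodset_indF.
- by rewrite mulr0.
- by move=> y z Hy Hz; rewrite mulrDr Hy Hz.
- by move=> a b Ha Hb; rewrite mulrA (proj1 (proj2 Hu a Ha)).
Qed.

Lemma eps_r x : Sg g^-1 x -> x * u = x.
Proof.
have [H _] := Hfam g^-1; rewrite invgK in H.
move=> /(proj2 (H x)); move: x; apply: prodset_indF.
- by rewrite mul0r.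
- by move=> y z Hy Hz; rewrite mulrDl Hy Hz.
move=> p c Hp Hc; move: p Hp; apply: prodset_indF.
- by rewrite !mul0r.
- by move=> y z Hy Hz; rewrite !mulrDl Hy Hz.
move=> a b Ha Hb; rewrite -!mulrA [b * (c * u)]mulrA; congr (_ * _).
exact: (proj2 (proj2 Hu _ (prodset_single Hb Hc))).
Qed.

Lemma eps_idem : u * u = u.
Proof. by case: Hu => H1 H2; case: (H2 u H1). Qed.

Lemma eps_central r : Sg 1%g r -> u * r = r * u.
Proof.
move=> Hr; case: Hu => H1 H2.
have E1 := proj2 (H2 _ (Pg_rmul Hr H1)).
have E2 := proj1 (H2 _ (Pg_lmul Hr H1)).
by rewrite -E1 -mulrA E2.
Qed.

Lemma eps_B : central_idempotent_of (Sg 1%g) u.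
Proof. split; first exact: eps_R. split; last exact: eps_idem.
by move=> x Hx; apply: eps_central. Qed.
End Eps.

End Grad.
Section Bool.
Variables (G : groupType) (S : pzRingType) (Sg : G -> S -> Prop).
Hypothesis Hes : epsilon_strong Sg.
Variable u : S.
Hypothesis Hu1 : is_identity_of (Sg 1%g) u.
Local Notation R := (Sg 1%g).
Local Notation B := (central_idempotent_of (Sg 1%g)).

Lemma R0 : R 0. Proof. exact: Sg0. Qed.
Lemma RB x y : R x -> R y -> R (x - y). Proof. exact: SgB. Qed.
Lemma RM x y : R x -> R y -> R (x * y). Proof. exact: R1M. Qed.
Lemma uR : R u. Proof. by case: Hu1. Qed.
Lemma ul x : R x -> u * x = x. Proof. by case: Hu1 => _ H /H []. Qed.
Lemma ur x : R x -> x * u = x. Proof. by case: Hu1 => _ H /H []. Qed.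

Lemma BR x : B x -> R x. Proof. by case. Qed.
Lemma Bidem x : B x -> x * x = x. Proof. by case=> _ []. Qed.
Lemma Bcomm a b : B a -> R b -> a * b = b * a.
Proof. by case=> _ [H _]; apply: H. Qed.

Lemma B_u : B u.
Proof. split; first exact: uR. split; last exact: (ul uR).
by move=> x Hx; rewrite ul // ur. Qed.

Lemma B_0 : B 0.
Proof. split; first exact: R0. split; last by rewrite mulr0.
by move=> x _; rewrite mulr0 mul0r. Qed.

Lemma B_mul a b : B a -> B b -> B (a * b).
Proof.
move=> Ba Bb; split; first by apply: RM; apply: BR.
split.
  by move=> x Hx; rewrite -mulrA (Bcomm Bb Hx) mulrA (Bcomm Ba Hx) mulrA.
rewrite -mulrA [b * (a * b)]mulrA -(Bcomm Ba (BR Bb)) -mulrA (Bidem Bb).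
by rewrite mulrA (Bidem Ba).
Qed.

Lemma B_compl a : B a -> B (u - a).
Proof.
move=> Ba; split; first by apply: RB; [exact: uR | exact: BR].
split.
  by move=> x Hx; rewrite mulrBl mulrBr ul // ur // (Bcomm Ba Hx).
by rewrite mulrBl !mulrBr (ul uR) (ul (BR Ba)) (ur (BR Ba)) (Bidem Ba) subrr subr0.
Qed.

Lemma join_eq a b : B a -> B b -> join a b = u - (u - a) * (u - b).
Proof.
move=> Ba Bb; rewrite /join mulrBl !mulrBr (ul uR) (ul (BR Bb)) (ur (BR Ba)).
exact: zmod_id1.
Qed.

Lemma B_join a b : B a -> B b -> B (join a b).
Proof.
move=> Ba Bb; rewrite join_eq //; apply: B_compl; apply: B_mul; exact: B_compl.
Qed.

Definition ltB (y x : S) := B y /\ B x /\ y * x = y /\ y <> x.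

Lemma down_fin : well_founded ltB ->
  forall x, B x -> exists l : seq S, forall z, B z -> z * x = z -> z \in l.
Proof.
move=> Hwf x; elim/(well_founded_ind Hwf): x => x IH Bx.
case: (classic (exists y, ltB y x /\ y <> 0)).
  move=> [y [[By [_ [Hyx Hyx']]] Hy0]].
  set w := x * (u - y).
  have Bw : B w by apply: B_mul => //; apply: B_compl.
  have Hxy : x * y = y by rewrite (Bcomm Bx (BR By)).
  have Ew : w = x - y by rewrite /w mulrBr (ur (BR Bx)) Hxy.
  have [l1 Hl1] := IH y (conj By (conj Bx (conj Hyx Hyx'))) By.
  have Hwx : ltB w x.
    split=> //; split=> //; split.
      by rewrite Ew mulrBl Bidem // Hyx.
    rewrite Ew => E; apply: Hy0; apply: oppr_inj; apply: (@addrI _ x).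
    by rewrite E oppr0 addr0.
  have [l2 Hl2] := IH w Hwx Bw.
  exists [seq a + b | a <- l1, b <- l2] => z Bz Hzx.
  have -> : z = z * y + z * w.
    by rewrite Ew mulrBr -{2}Hzx -mulrA Hxy addrC subrK Hzx.
  apply: allpairs_f.
    by apply: Hl1; [apply: B_mul | rewrite -mulrA Bidem].
  by apply: Hl2; [apply: B_mul | rewrite -mulrA Bidem].
move=> Hno; exists [:: 0; x] => z Bz Hzx.
case: (z =P x) => [->|Hne]; first by rewrite !inE eqxx orbT.
case: (z =P 0) => [->|Hz0]; first by rewrite !inE eqxx.
by exfalso; apply: Hno; exists z; split.
Qed.

Lemma wf_of_noasc :
  (forall a : nat -> S, (forall n, ltB (a n) (a n.+1)) -> False) -> well_founded ltB.
Proof.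
move=> Hna x0; apply: NNPP => Hx0.
pose step x := epsilon (inhabits 0) (fun y => ltB y x /\ ~ Acc ltB y).
have Hstep x : ~ Acc ltB x -> ltB (step x) x /\ ~ Acc ltB (step x).
  move=> Hx; apply: (epsilon_spec (inhabits (0:S)) (fun y => ltB y x /\ ~ Acc ltB y)); apply: NNPP => Hne; apply: Hx.
  constructor => y Hy; apply: NNPP => Hy'; apply: Hne; by exists y.
pose c n := iter n step x0.
have Hc n : ~ Acc ltB (c n) by elim: n => [|n IH] //=; case: (Hstep _ IH).
apply: (Hna (fun n => u - c n)) => n.
have [[Bd [Bc [Hdc Hne]]] _] := Hstep _ (Hc n).
rewrite /= -/(c n) in Bd Hdc Hne *.
set d := step (c n) in Bd Hdc Hne *.
split; first exact: B_compl.
split; first exact: B_compl.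
split.
  rewrite mulrBl !mulrBr (ul uR) (ul (BR Bd)) (ur (BR Bc)) (Bcomm Bc (BR Bd)) Hdc.
  by rewrite opprB addrA subrK.
move=> /addrI /oppr_inj E; exact: Hne.
Qed.

Lemma noasc_l : left_noetherian R ->
  forall a : nat -> S, (forall n, ltB (a n) (a n.+1)) -> False.
Proof.
move=> HL a Ha.
pose I n := fun z => exists r, R r /\ z = r * a n.
have HaR n : R (a n) by case: (Ha n) => /BR.
have HI n : left_ideal_of R (I n).
  split; first by move=> z [r [Hr ->]]; apply: RM.
  split; first split.
  - by exists 0; rewrite mul0r; split => //; apply: R0.
  - by move=> x y [r [Hr ->]] [s [Hs ->]]; exists (r - s); rewrite mulrBl; split => //; apply: RB.
  - by move=> r x Hr [s [Hs ->]]; exists (r * s); rewrite mulrA; split => //; apply: RM.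
have Hch n x : I n x -> I n.+1 x.
  move=> [r [Hr ->]]; exists (r * a n); split; first by apply: RM.
  by case: (Ha n) => _ [_ [E _]]; rewrite -mulrA E.
have [N HN] := HL I HI Hch.
have : I N.+1 (a N.+1) by exists u; split; [exact: uR | rewrite ul].
move/(proj1 (HN N.+1 (leqnSn N) _)) => [r [Hr E]].
case: (Ha N) => BN [BN1 [E1 Hne]]; apply: Hne.
rewrite -E1 (Bcomm BN (HaR _)) {1}E -mulrA Bidem //.
Qed.

Lemma noasc_r : right_noetherian R ->
  forall a : nat -> S, (forall n, ltB (a n) (a n.+1)) -> False.
Proof.
move=> HL a Ha.
pose I n := fun z => exists r, R r /\ z = a n * r.
have HaR n : R (a n) by case: (Ha n) => /BR.
have HI n : right_ideal_of R (I n).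
  split; first by move=> z [r [Hr ->]]; apply: RM.
  split; first split.
  - by exists 0; rewrite mulr0; split => //; apply: R0.
  - by move=> x y [r [Hr ->]] [s [Hs ->]]; exists (r - s); rewrite mulrBr; split => //; apply: RB.
  - by move=> r x Hr [s [Hs ->]]; exists (s * r); rewrite mulrA; split => //; apply: RM.
have Hch n x : I n x -> I n.+1 x.
  move=> [r [Hr ->]]; exists (a n * r); split; first by apply: RM.
  case: (Ha n) => Bn [_ [E _]]; rewrite mulrA -(Bcomm Bn (HaR n.+1)) E //.
have [N HN] := HL I HI Hch.
have : I N.+1 (a N.+1) by exists u; split; [exact: uR | rewrite ur].
move/(proj1 (HN N.+1 (leqnSn N) _)) => [r [Hr E]].
case: (Ha N) => BN [BN1 [E1 Hne]]; apply: Hne.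
by rewrite -E1 {1}E mulrA Bidem // -E.
Qed.

Lemma noeth_fin : left_noetherian R \/ right_noetherian R ->
  exists l : seq S, forall z, B z -> z \in l.
Proof.
move=> HN.
have Hwf : well_founded ltB.
  by apply: wf_of_noasc; case: HN; [apply: noasc_l | apply: noasc_r].
have [l Hl] := down_fin Hwf B_u.
by exists l => z Bz; apply: Hl => //; apply: ur; apply: BR.
Qed.

End Bool.
Section Fin.
Variables (G : groupType) (S : pzRingType) (Sg : G -> S -> Prop).
Hypothesis Hes : epsilon_strong Sg.
Local Notation R := (Sg 1%g).
Local Notation B := (central_idempotent_of (Sg 1%g)).

Lemma R_identity : exists u, is_identity_of R u.
Proof.
have [_ [u Hu]] := Hfam Hes 1%g.
exists u; split; first exact: (eps_R Hes Hu).
move=> x Hx; split; first exact: (eps_l Hes Hu).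
by apply: (eps_r Hes Hu); rewrite invg1.
Qed.

Fixpoint sums (cs : seq S) : seq S :=
  if cs is c :: cs' then sums cs' ++ map (fun x => c + x) (sums cs') else [:: 0].

Lemma sums_mem (cs : seq S) (F : S -> S) :
  (forall c, c \in cs -> F c = 0 \/ F c = c) -> \sum_(c <- cs) F c \in sums cs.
Proof.
elim: cs => [|c cs IH] HF /=; first by rewrite big_nil mem_seq1.
have IH' : \sum_(c <- cs) F c \in sums cs.
  by apply: IH => d Hd; apply: HF; rewrite in_cons Hd orbT.
rewrite big_cons mem_cat; case: (HF c (mem_head _ _)) => ->.
  by rewrite add0r IH'.
by rewrite (map_f (fun x => c + x) IH') orbT.
Qed.

Lemma block_fin : block_decomposable R -> exists l : seq S, forall z, B z -> z \in l.
Proof.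
move=> [u [Hu [cs [Hcs Hsum]]]].
exists (sums cs) => z Bz.
have Rz := BR Bz.
have -> : z = \sum_(c <- cs) (z * c) by rewrite -mulr_sumr -Hsum (ur Hu Rz).
apply: sums_mem => c Hc.
have [Bc [Hc0 Hprim]] := Hcs c Hc.
have Rc := BR Bc.
have Ecz : c * z = z * c by rewrite (Bcomm Bc Rz).
have B2 : B (c * (u - z)) by apply: (B_mul Hes) => //; apply: (B_compl Hes Hu).
have Hprod : z * c * (c * (u - z)) = 0.
  rewrite -mulrA [c * (c * _)]mulrA (Bidem Bc) mulrA -Ecz -mulrA.
  by rewrite mulrBr (ur Hu Rz) (Bidem Bz) subrr mulr0.
have Hsplit : c = z * c + c * (u - z).
  by rewrite mulrBr (ur Hu Rc) Ecz addrC subrK.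
case: (Hprim _ _ (B_mul Hes Bz Bc) B2 Hprod Hsplit) => [->|E]; [by left|right].
move: E; rewrite mulrBr (ur Hu Rc) Ecz => /eqP; rewrite subr_eq0 => /eqP.
by move=> <-.
Qed.

Lemma fin_eps : (exists l : seq S, forall z, B z -> z \in l) -> epsilon_finite Sg.
Proof.
move=> [l Hl]; split => //; exists l => x [ls [_ [Hls ->]]].
apply: Hl; have [u Hu] := R_identity.
elim: ls Hls => [|a ls IH] Hls /=; first exact: (B_0 Hes).
apply: (B_join Hes Hu).
  by have [g Hg] := Hls a (mem_head _ _); apply: (eps_B Hes Hg).
by apply: IH => v Hv; apply: Hls; rewrite in_cons Hv orbT.
Qed.

End Fin.
Lemma subsub (S : pzRingType) (u x : S) : u - (u - x) = x.
Proof. by rewrite opprB addrC subrK. Qed.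

Section Ind.
Variables (G : groupType) (S : pzRingType) (Sg : G -> S -> Prop).
Hypothesis Hes : epsilon_strong Sg.
Variable N : G -> Prop.
Hypothesis HN : normal_subgroup N.
Local Notation R := (Sg 1%g).
Local Notation B := (central_idempotent_of (Sg 1%g)).
Local Notation SC := (induced_component Sg N).

Lemma N1 : N 1%g. Proof. by case: HN. Qed.
Lemma Ninv y : N y -> N y^-1.
Proof. by case: HN => H1 [H2 _] Hy; rewrite -[(y^-1)%g]mul1g; apply: H2. Qed.
Lemma Nmul x y : N x -> N y -> N (x * y)%g.
Proof. by case: HN => H1 [H2 _] Hx Hy; rewrite -[y]invgK; apply: H2 => //; apply: Ninv. Qed.
Lemma Nconj g n : N n -> N (g^-1 * n * g)%g.
Proof. by case: HN => _ [_ H3]; apply: H3. Qed.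

Lemma SC0 g : SC g 0.
Proof. by exists [::]; split => //; rewrite big_nil. Qed.
Lemma SCD g x y : SC g x -> SC g y -> SC g (x + y).
Proof.
move=> [l1 [H1 ->]] [l2 [H2 ->]]; exists (l1 ++ l2); split; last by rewrite big_cat.
by move=> p; rewrite mem_cat => /orP [] ?; [apply: H1 | apply: H2].
Qed.
Lemma SC_single g h x : N (g^-1 * h)%g -> Sg h x -> SC g x.
Proof.
move=> Hn Hx; exists [:: (h, x)]; split; last by rewrite big_seq1.
by move=> p; rewrite mem_seq1 => /eqP ->.
Qed.

Lemma SC_mul g1 g2 x y : SC g1 x -> SC g2 y -> SC (g1 * g2)%g (x * y).
Proof.
move=> [l1 [H1 ->]] [l2 [H2 ->]]; rewrite mulr_suml.
apply: sumP; [exact: SC0 | exact: SCD | move=> p Hp].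
rewrite mulr_sumr; apply: sumP; [exact: SC0 | exact: SCD | move=> q Hq].
have [Np Sp] := H1 p Hp; have [Nq Sq] := H2 q Hq.
apply: (@SC_single _ (p.1 * q.1)%g); last exact: SgM.
have -> : ((g1 * g2)^-1 * (p.1 * q.1) =
   (g2^-1 * (g1^-1 * p.1) * g2) * (g2^-1 * q.1))%g.
  by rewrite invgM -!mulgA mulVKg.
by apply: Nmul => //; apply: Nconj.
Qed.

Lemma SC_inv1 g h : N (g^-1 * h)%g -> N ((g^-1)^-1 * h^-1)%g.
Proof.
move=> /Ninv /(Nconj g^-1); rewrite invgK invgM invgK mulgA mulgK //.
Qed.

Lemma SC_inv2 g k : N ((g^-1)^-1 * k)%g -> N (g^-1 * k^-1)%g.
Proof.
rewrite invgK => /(Nconj g) /Ninv; rewrite mulKg invgM //.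
Qed.

Lemma SC_lmul1 g r x : R r -> SC g x -> SC g (r * x).
Proof.
move=> Hr Hx; rewrite -[g]mul1g; apply: SC_mul => //.
by apply: (@SC_single _ 1%g) => //; rewrite invg1 mulg1; exact: N1.
Qed.

Lemma Pc_lmul g r x : R r -> prodset (SC g) (SC g^-1) x ->
   prodset (SC g) (SC g^-1) (r * x).
Proof.
move=> Hr; move: x; apply: prodset_indF.
- by rewrite mulr0; apply: prodset0.
- by move=> y z Hy Hz; rewrite mulrDr; apply: prodsetD.
- by move=> a b Ha Hb; rewrite mulrA; apply: prodset_single => //; apply: SC_lmul1.
Qed.

Hypothesis Hnoeth : left_noetherian R \/ right_noetherian R.

Definition epsf (h : G) : S := epsilon (inhabits 0) (is_eps Sg h).
Lemma Heps h : is_eps Sg h (epsf h).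
Proof. by apply: epsilon_spec; case: (Hfam Hes h). Qed.

Lemma main_c : eps_strong_family (fun g => (g^-1)%g) SC.
Proof.
move=> g.
have [u Hu] := R_identity Hes.
have Hwf : well_founded (ltB Sg).
  by apply: (wf_of_noasc Hes Hu); case: Hnoeth; [apply: (noasc_l Hes Hu) | apply: (noasc_r Hes Hu)].
pose f := fun h p => (u - epsf h) * p.
pose K := fun p => exists hs : seq G,
   (forall h, h \in hs -> N (g^-1 * h)%g) /\ p = foldr f u hs.
have KB p : K p -> B p.
  move=> [hs [_ ->]]; elim: hs => [|h hs IH] /=; first exact: (B_u Hu).
  by apply: (B_mul Hes) => //; apply: (B_compl Hes Hu); apply: (eps_B Hes (Heps h)).
have foldr_mul hs p : R p -> foldr f p hs = foldr f u hs * p.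
  move=> Rp; elim: hs => [|h hs IH] /=; first by rewrite (ul Hu Rp).
  by rewrite /f IH mulrA.
have KM p q : K p -> K q -> K (p * q).
  move=> [h1 [H1 ->]] [h2 [H2 ->]]; exists (h1 ++ h2); split.
    by move=> h; rewrite mem_cat => /orP [] ?; [apply: H1 | apply: H2].
  by rewrite foldr_cat (foldr_mul h1 (foldr f u h2)) //; exact: (BR (KB _ (ex_intro _ h2 (conj H2 erefl)))).
have [m [Km Hmin]] : exists m, K m /\ forall y, ltB Sg y m -> ~ K y.
  apply: NNPP => Hno.
  have Hall : forall x, ~ K x.
    apply: (well_founded_ind Hwf) => x IH Kx; apply: Hno; exists x; split; first exact: Kx.
    by move=> y Hy Ky; apply: (IH y Hy Ky).
  by apply: (Hall u); exists [::].
have Bm := KB _ Km.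
have Hpm p : K p -> p * m = m.
  move=> Kp; apply: NNPP => Hne; apply: (Hmin (p * m)); last exact: KM.
  split; first by apply: (B_mul Hes) => //; apply: KB.
  by split => //; split => //; rewrite -mulrA (Bidem Bm).
pose M := u - m.
have RM : R M by apply: (RB Hes); [exact: (uR Hu) | exact: BR].
have HM h : N (g^-1 * h)%g -> M * epsf h = epsf h /\ epsf h * M = epsf h.
  move=> Hh.
  have Be := eps_B Hes (Heps h).
  have Kh : K (u - epsf h).
    exists [:: h]; split; first by move=> h'; rewrite mem_seq1 => /eqP ->.
    by rewrite /= /f (ur Hu (BR (B_compl Hes Hu Be))).
  have E : (u - epsf h) * m = m by apply: Hpm.
  have E2 : epsf h * m = 0.
    by move: E; rewrite mulrBl (ul Hu (BR Bm)) => /eqP; rewrite subr_eq addrC -subr_eq subrr eq_sym => /eqP.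
  have E3 : epsf h * M = epsf h by rewrite /M mulrBr (ur Hu (BR Be)) E2 subr0.
  by split => //; rewrite -(Bcomm Be RM).
have HMP : prodset (SC g) (SC g^-1) M.
  case: Km => hs [Hhs Em]; rewrite /M Em; clear Em Hmin Hpm HM.
  elim: hs Hhs => [|h hs IH] Hhs /=; first by rewrite subrr; apply: prodset0.
  have Hh : N (g^-1 * h)%g by apply: Hhs; rewrite mem_head.
  have IH' : prodset (SC g) (SC g^-1) (u - foldr f u hs).
    by apply: IH => h' Hh'; apply: Hhs; rewrite in_cons Hh' orbT.
  set p := foldr f u hs in IH' *.
  have Bp : B p by apply: KB; exists hs; split => // h' Hh'; apply: Hhs; rewrite in_cons Hh' orbT.
  have Be := eps_B Hes (Heps h).
  rewrite /f -{1}(subsub u p) -(join_eq Hu Be (B_compl Hes Hu Bp)) /join -mulNr.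
  have He : prodset (SC g) (SC g^-1) (epsf h).
    case: (Heps h) => He _; move: He; apply: prodset_mono => a Ha.
      exact: (SC_single Hh).
    by apply: (SC_single (SC_inv1 Hh)).
  apply: prodsetD; first exact: prodsetD.
  apply: Pc_lmul => //; apply: SgN => //; exact: BR.
have M3 x : SC g x -> M * x = x.
  move=> [l [Hl ->]]; rewrite mulr_sumr; apply: eq_big_seq => p Hp.
  have [Np Sp] := Hl p Hp.
  by rewrite -(eps_l Hes (Heps p.1) Sp) mulrA (proj1 (HM _ Np)).
have M4 x : SC g^-1 x -> x * M = x.
  move=> [l [Hl ->]]; rewrite mulr_suml; apply: eq_big_seq => p Hp.
  have [Np Sp] := Hl p Hp.
  have Sp' : Sg ((p.1^-1)^-1)%g p.2 by rewrite invgK.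
  by rewrite -(eps_r Hes (Heps (p.1^-1)%g) Sp') -mulrA (proj2 (HM _ (SC_inv2 Np))).
split.
  move=> x; split.
    move: x; apply: prodset_indF; [exact: SC0 | exact: SCD | move=> p c Hp Hc].
    move: p Hp; apply: prodset_indF.
    - by rewrite mul0r; apply: SC0.
    - by move=> y z Hy Hz; rewrite mulrDl; apply: SCD.
    move=> a b Ha Hb.
    have := SC_mul (SC_mul Ha Hb) Hc; rewrite mulgV mul1g //.
  by move=> Hx; rewrite -(M3 x Hx); apply: prodset_single.
exists M; split => // x; move: x; apply: prodset_indF.
- by rewrite mulr0 mul0r.
- by move=> y z [Hy1 Hy2] [Hz1 Hz2]; split; [rewrite mulrDr Hy1 Hz1 | rewrite mulrDl Hy2 Hz2].
- by move=> a b Ha Hb; split; [rewrite mulrA (M3 a Ha) | rewrite -mulrA (M4 b Hb)].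
Qed.

End Ind.

Theorem theorem6p5 (G : groupType) (S : pzRingType) (Sg : G -> S -> Prop) :
  epsilon_strong Sg ->
  (block_decomposable (Sg 1%g) -> epsilon_finite Sg) /\
  (left_noetherian (Sg 1%g) \/ right_noetherian (Sg 1%g) -> epsilon_finite Sg) /\
  (left_noetherian (Sg 1%g) \/ right_noetherian (Sg 1%g) ->
     forall N : G -> Prop, normal_subgroup N ->
       eps_strong_family (fun g => (g^-1)%g) (induced_component Sg N)).
Proof.
move=> Hes; split.
  by move=> Hb; apply: (fin_eps Hes); apply: (block_fin Hes).
split.
  move=> Hn; apply: (fin_eps Hes); have [u Hu] := R_identity Hes.
  exact: (noeth_fin Hes Hu).
by move=> Hn N HN; apply: (main_c Hes HN Hn).
Qed.
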